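(* Let $\varphi=\forall x_1\exists y_1\cdots\forall x_k\exists y_k\,P$ be a positive Horn sentence over a finite relational signature $\sigma$ with $P$ a conjunction of equality-free atomic $\sigma$-formulas. Let $R\in\sigma$ be $p$-ary and let $t_1,\dots,t_p,t'\in T_\varphi(C_\omega)$ be such that $\mathrm{rank}(t')$ is distinct from each of $\mathrm{rank}(t_1),\dots,\mathrm{rank}(t_p)$. Then for every $t''\in T_\varphi(C_\omega)$: if $R(t_1,\dots,t_p)$ holds in $\mathcal{T}_\varphi(C_\omega)$, then $R(t_1[t'/t''],\dots,t_p[t'/t''])$ holds in $\mathcal{T}_\varphi(C_\omega)$.
   Context: Let $f_1,\dots,f_k$ be new function symbols, $f_i$ of arity $i$, $\mathrm{Sk}(\varphi)=\forall x_1\cdots\forall x_k\,P(x_1,f_1(x_1),\dots,x_k,f_k(x_1,\dots,x_k))$, and $C_\omega=\{c_1,c_2,\dots\}$ new constants. $T_\varphi(C_\omega)$ is the set of closed terms built from $C_\omega$ with the $f_i$; the rank of a term is the maximal nesting depth of function symbols in it (constants have rank $0$). $\mathcal{T}_\varphi(C_\omega)$ is the $\sigma$-structure on $T_\varphi(C_\omega)$ in which $R(s_1,\dots,s_p)$ holds iff it is obtained from an atom of the matrix of $\mathrm{Sk}(\varphi)$ by substituting terms for $x_1,\dots,x_k$. For terms $t,t',t''$, $t[t'/t'']$ is the term obtained from $t$ by replacing every occurrence of the subterm $t'$ by $t''$. *)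

(* Defs.v *)
From Stdlib Require List.
From mathcomp Require Import all_boot.
Set Implicit Arguments.
Unset Strict Implicit.
Unset Printing Implicit Defensive.

(* Closed terms over the constants C_omega = {c_0, c_1, ...} (Const n)
   and the Skolem function symbols f_1..f_k (App i args = f_i(args)). *)
Inductive term : Type :=
| Const of nat
| App of nat & seq term.

Fixpoint term_eqb (s t : term) : bool :=
  match s, t with
  | Const m, Const n => m == n
  | App i ss, App j ts =>
      (i == j) &&
      (fix eqs (ss ts : seq term) : bool :=
         match ss, ts with
         | [::], [::] => true
         | s1 :: ss', t1 :: ts' => term_eqb s1 t1 && eqs ss' ts'
         | _, _ => false
         end) ss ts
  | _, _ => false
  end.

(* Membership in T_phi(C_omega): f_i only for 1 <= i <= k, applied to i args. *)
Fixpoint wf (k : nat) (t : term) : bool :=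
  match t with
  | Const _ => true
  | App i ts => [&& 0 < i, i <= k, size ts == i & all (wf k) ts]
  end.

Fixpoint rank (t : term) : nat :=
  match t with
  | Const _ => 0
  | App _ ts => (foldr maxn 0 (map rank ts)).+1
  end.

(* t[t'/t'']: replace every occurrence of the subterm t' in t by t''. *)
Fixpoint tsubst (t' t'' t : term) : term :=
  if term_eqb t t' then t''
  else match t with
       | Const _ => t
       | App i ts => App i (map (tsubst t' t'') ts)
       end.

(* Variables of phi: VX j = x_{j+1}, VY j = y_{j+1}, j < k. *)
Inductive var (k : nat) : Type :=
| VX of 'I_k
| VY of 'I_k.

(* Value of a variable of the Skolemized matrix under an assignment
   th of the universal variables (x_{m+1} |-> th m):
   y_{j+1} becomes f_{j+1}(x_1, ..., x_{j+1}). *)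
Definition sk_val (k : nat) (th : nat -> term) (v : var k) : term :=
  match v with
  | VX j => th j
  | VY j => App j.+1 (mkseq th j.+1)
  end.

(* The structure T_phi(C_omega): the matrix P is a list of atoms
   (R, [z_1; ...; z_p]) (equality-free atomic formulas, conjunction).
   R(s_1..s_p) holds iff it is obtained from an atom of the matrix of
   Sk(phi) by substituting terms of T_phi(C_omega) for x_1..x_k. *)
Definition holdsT (Sig : Type) (k : nat) (P : seq (Sig * seq (var k)))
    (R : Sig) (s : seq term) : Prop :=
  exists a, List.In a P /\ a.1 = R /\
    exists th : nat -> term,
      (forall m, m < k -> wf k (th m)) /\ s = map (sk_val th) a.2.

(* Main.v *)
Require Import Defs.
From Stdlib Require List.
From mathcomp Require Import all_boot.

Section Aux.
Variable Pt : term -> Prop.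
Hypothesis Hc : forall n, Pt (Const n).
Hypothesis Ha : forall i ts, (forall t, List.In t ts -> Pt t) -> Pt (App i ts).
Fixpoint term_ind2 (t : term) : Pt t :=
  match t with
  | Const n => Hc n
  | App i ts => Ha i ts
      ((fix F (ts : seq term) : forall t, List.In t ts -> Pt t :=
          match ts return forall t, List.In t ts -> Pt t with
          | nil => fun t H => False_ind _ H
          | s :: ss => fun t H =>
              match H with
              | or_introl e => eq_ind s Pt (term_ind2 s) t e
              | or_intror H' => F ss t H'
              end
          end) ts)
  end.
End Aux.

Lemma term_eqbP s t : term_eqb s t -> s = t.
Proof.
elim/term_ind2: s t => [n|i ss IH] [m|j ts] //=.
  by move/eqP=> ->.
case/andP=> /eqP -> H; congr App.
elim: ss ts IH H => [|s ss IHs] [|t ts] //= IH /andP [H1 H2].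
rewrite (IH s (or_introl erefl) t H1); congr cons.
by apply: IHs => // u Hu; apply: IH; right.
Qed.

Lemma wf_tsubst k t' t'' t : wf k t'' -> wf k t -> wf k (tsubst t' t'' t).
Proof.
move=> H''; elim/term_ind2: t => [n|i ts IH] /=; first by case: ifP.
case: ifP => // _ /and4P [H1 H2 H3 H4].
rewrite /= H1 H2 size_map H3 /= all_map.
elim: ts IH H4 {H3} => [|s ss IHs] //= IH /andP [Hs Hss].
rewrite IH //=; first (apply: IHs => // u Hu; apply: IH; right) => //.
by left.
Qed.

Lemma tsubst_App t' t'' i ts : tsubst t' t'' (App i ts) =
  if term_eqb (App i ts) t' then t'' else App i (map (tsubst t' t'') ts).
Proof. by []. Qed.

Theorem mainTheorem11
  (Sig : finType) (ar : Sig -> nat) (k : nat)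
  (P : seq (Sig * seq (var k)))
  (HP : forall a, List.In a P -> size a.2 = ar a.1)
  (R : Sig) (ts : seq term) (t' t'' : term)
  (Hsize : size ts = ar R)
  (Hts : all (wf k) ts) (Ht' : wf k t') (Ht'' : wf k t'')
  (Hrank : all (fun t => rank t != rank t') ts) :
  holdsT P R ts -> holdsT P R (map (tsubst t' t'') ts).
Proof.
case=> a [Ha [HR [th [Hwf Hs]]]].
exists a; split => //; split => //.
exists (fun m => tsubst t' t'' (th m)); split.
  by move=> m Hm; apply: wf_tsubst => //; apply: Hwf.
subst ts; elim: a.2 Hrank => [|v vs IH] //= /andP [Hv Hvs].
rewrite IH //; congr cons.
case: v Hv => [j|j] //= Hv.
have E : term_eqb (App j.+1 (mkseq th j.+1)) t' = false.
  have Hv' : rank (App j.+1 (mkseq th j.+1)) != rank t' := Hv.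
  by apply/negP => /term_eqbP Ee; rewrite Ee eqxx in Hv'.
change (tsubst t' t'' (App j.+1 (mkseq th j.+1)) = App j.+1 (mkseq (fun m => tsubst t' t'' (th m)) j.+1)).
by rewrite tsubst_App E /mkseq -map_comp.
Qed.
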